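(* Consider Algorithm 1 in the asynchronous model described in the context and assume $\delta\le\frac17$. Let $v,u$ be two nodes and let $T\ge T_s$. For $i\ge1$ let $f_i$ (respectively $g_i$) denote the $i$-th full frame of $v$ (respectively $u$) after $T$. Then some frame in $\{f_1,f_2\}$ together with some frame in $\{g_1,g_2\}$ forms an aligned pair, i.e., one of $(f_1,g_1),(f_1,g_2),(f_2,g_1),(f_2,g_2)$ is aligned.
   Context: Each node $u$ has a clock $C_u$ with $(1-\delta)\Delta t\le C_u(t+\Delta t)-C_u(t)\le(1+\delta)\Delta t$ for all real times $t$ and $\Delta t\ge0$; offsets between clocks are arbitrary. In Algorithm 1 each node, from its (arbitrary) start time, partitions its local time into consecutive frames of length $L$ as measured by its own clock, each frame divided into three consecutive slots of local length $L/3$; frames and slots are regarded as real-time intervals. $T_s$ is the real time by which all nodes have started. A full frame after $T$ is a frame starting at or after $T$. A pair of frames $(f,g)$ is aligned if at least one slot of $f$ lies completely within $g$ in real time. *)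

(* Defs.v *)
From Stdlib Require Import Reals.
Open Scope R_scope.

(* Drift bound on a hardware clock C : real time -> local time. *)
Definition clock_ok (delta : R) (C : R -> R) : Prop :=
  forall t dt, 0 <= dt ->
    (1 - delta) * dt <= C (t + dt) - C t <= (1 + delta) * dt.

(* Frame k (k = 0,1,2,...) of a node with clock C started at real time s,
   frame length L: the real-time interval where the local time elapsed since
   the start lies in [kL, (k+1)L). *)
Definition frame (C : R -> R) (s L : R) (k : nat) (t : R) : Prop :=
  s <= t /\ C s + INR k * L <= C t < C s + (INR k + 1) * L.

Definition slot (C : R -> R) (s L : R) (k j : nat) (t : R) : Prop :=
  s <= t /\
  C s + INR k * L + INR j * (L / 3) <= C t < C s + INR k * L + (INR j + 1) * (L / 3).

Definition frame_start (C : R -> R) (s L : R) (k : nat) (a : R) : Prop :=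
  s <= a /\ C a = C s + INR k * L.

Definition first_full_frame (C : R -> R) (s L T : R) (k : nat) : Prop :=
  (exists a, frame_start C s L k a /\ T <= a) /\
  (forall j a, (j < k)%nat -> frame_start C s L j a -> a < T).

Definition aligned (Cf : R -> R) (sf : R) (Cg : R -> R) (sg : R) (L : R)
  (kf kg : nat) : Prop :=
  exists j, (j < 3)%nat /\ forall t, slot Cf sf L kf j t -> frame Cg sg L kg t.

(* Main.v *)
Require Import Defs.
From Stdlib Require Import Reals Lra Lia.
Open Scope R_scope.

Lemma clk_d0 d C : clock_ok d C -> 0 <= d.
Proof. intros H. specialize (H 0 1 ltac:(lra)). lra. Qed.

Lemma clk_sp d C x y : clock_ok d C -> d <= 1/7 -> x <= y ->
  (6/7)*(y-x) <= C y - C x <= (8/7)*(y-x).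
Proof.
  intros H Hd Hxy. pose proof (clk_d0 _ _ H).
  specialize (H x (y-x) ltac:(lra)). replace (x + (y-x)) with y in H by ring.
  assert ((6/7)*(y-x) <= (1-d)*(y-x)) by (apply Rmult_le_compat_r; lra).
  assert ((1+d)*(y-x) <= (8/7)*(y-x)) by (apply Rmult_le_compat_r; lra).
  lra.
Qed.

Lemma clk_lt d C x y : clock_ok d C -> d <= 1/7 -> x < y -> C x < C y.
Proof. intros H Hd Hxy. pose proof (clk_sp _ _ x y H Hd ltac:(lra)). lra. Qed.

Lemma clk_le_rev d C x y : clock_ok d C -> d <= 1/7 -> C x <= C y -> x <= y.
Proof. intros H Hd Hc. destruct (Rle_lt_dec x y); auto.
  pose proof (clk_lt _ _ y x H Hd r). lra. Qed.

Lemma clk_lt_rev d C x y : clock_ok d C -> d <= 1/7 -> C x < C y -> x < y.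
Proof. intros H Hd Hc. destruct (Rlt_le_dec x y); auto.
  pose proof (clk_sp _ _ y x H Hd r). lra. Qed.

Lemma clk_inj d C x y : clock_ok d C -> d <= 1/7 -> C x = C y -> x = y.
Proof. intros H Hd Hc. apply Rle_antisym; eapply clk_le_rev; eauto; lra. Qed.

Lemma clk_cont d C : clock_ok d C -> d <= 1/7 -> continuity C.
Proof.
  intros H Hd x0 eps Heps. exists (eps/2). split; [lra|].
  intros x [_ Hx]. simpl in *. unfold R_dist in *.
  destruct (Rle_lt_dec x0 x).
  - pose proof (clk_sp _ _ x0 x H Hd r). rewrite Rabs_right in Hx by lra.
    rewrite Rabs_right by lra. lra.
  - pose proof (clk_sp _ _ x x0 H Hd ltac:(lra)). rewrite Rabs_left in Hx by lra.
    rewrite Rabs_left1 by lra. lra.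
Qed.

Lemma clk_hit d C : clock_ok d C -> d <= 1/7 -> forall y, {t | C t = y}.
Proof.
  intros H Hd y. set (z := 2 * (Rabs (y - C 0) + 1)).
  assert (Hz : 0 < z) by (unfold z; pose proof (Rabs_pos (y - C 0)); lra).
  pose proof (clk_sp _ _ 0 z H Hd ltac:(lra)).
  pose proof (clk_sp _ _ (-z) 0 H Hd ltac:(lra)).
  pose proof (Rle_abs (y - C 0)). pose proof (Rle_abs (-(y - C 0))). rewrite Rabs_Ropp in *.
  destruct (IVT (fun t => C t - y) (-z) z) as [t [_ Ht]].
  - intros x. apply continuity_pt_minus. apply (clk_cont _ _ H Hd). apply continuity_pt_const. intros a b; auto.
  - lra.
  - unfold z in *. lra.
  - unfold z in *. lra.
  - exists t. lra.
Qed.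

Lemma ffb d C s L Ts T k : clock_ok d C -> d<=1/7 -> 0<L -> s <= Ts -> Ts <= T ->
  first_full_frame C s L T k ->
  exists a, C a = C s + INR k * L /\ T <= a /\ a <= T + 7/6*L.
Proof.
  intros H Hd HL Hs HT [[a [[Hsa Ha] HTa]] Hbef]. exists a. split; [exact Ha|]. split; [exact HTa|].
  destruct k as [|k].
  - simpl in Ha. assert (a = s) by (apply (clk_inj _ _ _ _ H Hd); lra). lra.
  - destruct (clk_hit _ _ H Hd (C s + INR k * L)) as [a0 Ha0].
    assert (0 <= INR k * L) by (apply Rmult_le_pos; [apply pos_INR|lra]).
    assert (s <= a0) by (apply (clk_le_rev _ _ _ _ H Hd); lra).
    assert (a0 < T) by (apply (Hbef k a0); [lia| split; auto]).
    rewrite S_INR in Ha.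
    assert (a0 <= a) by (apply (clk_le_rev _ _ _ _ H Hd); lra).
    pose proof (clk_sp _ _ a0 a H Hd H3). lra.
Qed.

Lemma first_ge (p : nat -> R) x c K : (forall n, p (S n) - p n <= c) -> p 0%nat <= x -> x < p K ->
  exists n, (n <= K)%nat /\ x <= p n /\ p n <= x + c.
Proof.
  intros Hc H0. induction K as [|K IH]; intros HK.
  - lra.
  - destruct (Rlt_le_dec x (p K)) as [h|h].
    + destruct (IH h) as [n [? ?]]. exists n. split; [lia|auto].
    + exists (S K). split; [lia|]. specialize (Hc K). lra.
Qed.

Lemma slot_in_frame d Cv Cu sv su L a j b P Q B1 B2 :
  clock_ok d Cv -> clock_ok d Cu -> d <= 1/7 ->
  Cv P = Cv sv + INR a * L + INR j * (L/3) ->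
  Cv Q = Cv sv + INR a * L + (INR j + 1) * (L/3) ->
  Cu B1 = Cu su + INR b * L -> Cu B2 = Cu su + (INR b + 1) * L ->
  su <= B1 -> B1 <= P -> Q <= B2 ->
  forall t, slot Cv sv L a j t -> frame Cu su L b t.
Proof.
  intros Hv Hu Hd HP HQ HB1 HB2 Hs h1 h2 t [_ [Ht1 Ht2]].
  assert (P <= t) by (apply (clk_le_rev _ _ _ _ Hv Hd); lra).
  assert (t < Q) by (apply (clk_lt_rev _ _ _ _ Hv Hd); lra).
  assert (Cu B1 <= Cu t) by (destruct (Req_dec B1 t); [subst; lra| apply Rlt_le, (clk_lt _ _ _ _ Hu Hd); lra]).
  assert (Cu t < Cu B2) by (apply (clk_lt _ _ _ _ Hu Hd); lra).
  split; lra.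
Qed.

Lemma idx n kv L : (n <= 5)%nat -> exists a j, (a = kv \/ a = S kv) /\ (j < 3)%nat /\
  INR a * L + INR j * (L/3) = INR kv * L + INR n * (L/3).
Proof.
  intros Hn.
  destruct n as [|[|[|[|[|[|n]]]]]]; try lia.
  - exists kv, 0%nat. split; [auto|split;[lia|]]. reflexivity.
  - exists kv, 1%nat. split; [auto|split;[lia|]]. reflexivity.
  - exists kv, 2%nat. split; [auto|split;[lia|]]. reflexivity.
  - exists (S kv), 0%nat. split; [auto|split;[lia|]]. rewrite S_INR; simpl; field.
  - exists (S kv), 1%nat. split; [auto|split;[lia|]]. rewrite S_INR; simpl; field.
  - exists (S kv), 2%nat. split; [auto|split;[lia|]]. rewrite S_INR; simpl; field.
Qed.

Theorem mainTheorem4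
  (delta L Ts T : R) (Cv Cu : R -> R) (sv su : R) (kv ku : nat) :
  delta <= 1 / 7 ->
  0 < L ->
  clock_ok delta Cv -> clock_ok delta Cu ->
  sv <= Ts -> su <= Ts -> Ts <= T ->
  first_full_frame Cv sv L T kv ->
  first_full_frame Cu su L T ku ->
  exists a b, (a = kv \/ a = S kv) /\ (b = ku \/ b = S ku) /\
    aligned Cv sv Cu su L a b.
Proof.
  intros Hd HL Hv Hu Hsv Hsu HT Fv Fu.
  destruct (ffb _ _ _ _ _ _ _ Hv Hd HL Hsv HT Fv) as [a1 [Ha1 [Ta1 Ua1]]].
  destruct (ffb _ _ _ _ _ _ _ Hu Hd HL Hsu HT Fu) as [b1 [Hb1 [Tb1 Ub1]]].
  pose (p := fun n => proj1_sig (clk_hit _ _ Hv Hd (Cv sv + INR kv * L + INR n * (L/3)))).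
  pose (q := fun n => proj1_sig (clk_hit _ _ Hu Hd (Cu su + INR ku * L + INR n * L))).
  assert (Hp : forall n, Cv (p n) = Cv sv + INR kv * L + INR n * (L/3))
    by (intros n; unfold p; destruct clk_hit; auto).
  assert (Hq : forall n, Cu (q n) = Cu su + INR ku * L + INR n * L)
    by (intros n; unfold q; destruct clk_hit; auto).
  clearbody p q.
  assert (p0 : p 0%nat = a1) by (apply (clk_inj _ _ _ _ Hv Hd); rewrite Hp; simpl; lra).
  assert (q0 : q 0%nat = b1) by (apply (clk_inj _ _ _ _ Hu Hd); rewrite Hq; simpl; lra).
  assert (Pmono : forall n, p n <= p (S n)).
  { intros n. apply (clk_le_rev _ _ _ _ Hv Hd). rewrite !Hp, S_INR. lra. }
  assert (Pup : forall n, p (S n) - p n <= 7/18 * L).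
  { intros n. pose proof (clk_sp _ _ _ _ Hv Hd (Pmono n)). rewrite !Hp, S_INR in H. lra. }
  assert (P6 : 7/4 * L <= p 6%nat - p 0%nat).
  { assert (p 0%nat <= p 6%nat) by (apply (clk_le_rev _ _ _ _ Hv Hd); rewrite !Hp; simpl; lra).
    pose proof (clk_sp _ _ _ _ Hv Hd H). rewrite !Hp in H0. simpl in H0. lra. }
  assert (Qmono : forall n, q n <= q (S n)).
  { intros n. apply (clk_le_rev _ _ _ _ Hu Hd). rewrite !Hq, S_INR. lra. }
  assert (Q1 : 7/8 * L <= q 1%nat - q 0%nat).
  { pose proof (clk_sp _ _ _ _ Hu Hd (Qmono 0%nat)). rewrite !Hq in H. simpl in H. lra. }
  assert (Q2 : 7/8 * L <= q 2%nat - q 1%nat).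
  { pose proof (clk_sp _ _ _ _ Hu Hd (Qmono 1%nat)). rewrite !Hq in H. simpl in H. lra. }
  assert (Fin : forall n m, (n <= 5)%nat -> (m <= 1)%nat -> q m <= p n -> p (S n) <= q (S m) ->
    exists a b, (a = kv \/ a = S kv) /\ (b = ku \/ b = S ku) /\ aligned Cv sv Cu su L a b).
  { intros n m Hn Hm H1 H2. destruct (idx n kv L Hn) as [a [j [Ha [Hj Heq]]]].
    exists a, (ku + m)%nat. split; [exact Ha|]. split.
    { destruct m as [|[|]]; [left; lia|right; lia|lia]. }
    exists j. split; [exact Hj|].
    assert (su <= q m).
    { destruct m as [|[|]]; try lia; pose proof (Qmono 0%nat); lra. }
    apply (slot_in_frame delta Cv Cu sv su L a j (ku+m) (p n) (p (S n)) (q m) (q (S m)) Hv Hu Hd).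
    - rewrite Hp. lra.
    - rewrite Hp, S_INR. lra.
    - rewrite Hq, plus_INR. lra.
    - rewrite Hq, plus_INR, S_INR. lra.
    - exact H.
    - exact H1.
    - exact H2. }
  destruct (Rle_lt_dec a1 b1) as [Hab|Hab].
  - destruct (first_ge p b1 (7/18*L) 6 Pup) as [n [Hn [H1 H2]]]; [lra|lra|].
    assert (n <> 6%nat) by (intro; subst; lra).
    apply (Fin n 0%nat); [lia|lia|lra|]. specialize (Pup n). lra.
  - destruct (Rle_lt_dec (q 1%nat) a1) as [h|h].
    + apply (Fin 0%nat 1%nat); [lia|lia|lra|]. specialize (Pup 0%nat). lra.
    + destruct (Rle_lt_dec (p 1%nat) (q 1%nat)) as [h'|h'].
      * apply (Fin 0%nat 0%nat); [lia|lia|lra|lra].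
      * apply (Fin 1%nat 1%nat); [lia|lia|lra|]. pose proof (Pup 0%nat). pose proof (Pup 1%nat). lra.
Qed.
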